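(* Let $\bm{A}=[\bm{A}_1\ \bm{A}_2]$ have full column rank with $\bm{A}_j^\top\bm{A}_j=\bm{I}_j$ and $\bm{C}:=\bm{A}_2^\top\bm{A}_1\ne0$. Let $S_{00}:=(0,1]\times(0,1]$, $S_{01}:=(0,1]\times[1,\infty)$, $S_{10}:=[1,\infty)\times(0,1]$. Then $\min_{(\gamma_1,\gamma_2)\in S_{00}}\rho(\bm{M}(\gamma_1,\gamma_2))=\rho(\bm{M}(1,1))$, $\min_{(\gamma_1,\gamma_2)\in S_{01}}\rho(\bm{M}(\gamma_1,\gamma_2))=\min_{\gamma_2\ge1}\rho(\bm{M}(1,\gamma_2))$, and $\min_{(\gamma_1,\gamma_2)\in S_{10}}\rho(\bm{M}(\gamma_1,\gamma_2))=\min_{\gamma_1\ge1}\rho(\bm{M}(\gamma_1,1))$.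
   Context: $\rho$: spectral radius. $\bm{M}(\gamma_1,\gamma_2)=\begin{bmatrix}(1-\gamma_1)\bm{I}_1&-\gamma_1\bm{C}^\top\\-\gamma_2(1-\gamma_1)\bm{C}&(1-\gamma_2)\bm{I}_2+\gamma_1\gamma_2\bm{C}\bm{C}^\top\end{bmatrix}$, the two-block gradient descent iteration matrix with stepsizes $\gamma_1,\gamma_2$ for least squares under $\bm{A}_j^\top\bm{A}_j=\bm{I}_j$. *)

(* Defs.v *)
From HB Require Import structures.
From mathcomp Require Import all_boot all_order all_algebra.
From mathcomp Require Import reals.
From mathcomp.real_closed Require Import complex.
Set Implicit Arguments. Unset Strict Implicit. Unset Printing Implicit Defensive.
Import Order.TTheory GRing.Theory Num.Theory.
Local Open Scope ring_scope.

Definition spectral_radius (R : realType) (n : nat) (M : 'M[R]_n) : R :=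
  let p := char_poly (map_mx (fun x : R => (x%:C)%C) M) in
  \big[Num.max/0]_(z <- sval (closed_field_poly_normal p)) Normc.normc z.

(* Two-block gradient-descent iteration matrix M(g1, g2) built from C. *)
Definition gd_iter_mx (R : realType) (n1 n2 : nat) (C : 'M[R]_(n2, n1))
    (g1 g2 : R) : 'M[R]_(n1 + n2) :=
  block_mx ((1 - g1)%:M) (- g1 *: C^T)
           (- (g2 * (1 - g1)) *: C) ((1 - g2)%:M + (g1 * g2) *: (C *m C^T)).

Definition is_min_on (T : Type) (R : realType) (P : T -> Prop) (f : T -> R)
    (v : R) : Prop :=
  (exists x, P x /\ f x = v) /\ (forall x, P x -> v <= f x).

(* Main.v *)
Require Import Defs.
From HB Require Import structures.
From mathcomp Require Import all_boot all_order all_algebra.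
From mathcomp Require Import reals.
From mathcomp.real_closed Require Import complex.
From mathcomp Require Import ring lra.
Import Order.TTheory GRing.Theory Num.Theory.
Local Open Scope ring_scope.
Import Normc.
Set Implicit Arguments. Unset Strict Implicit. Unset Printing Implicit Defensive.

Section SR.
Variable R : realType.
Local Notation C := R[i].

Definition cmx n (M : 'M[R]_n) := map_mx (fun x : R => (x%:C)%C) M.

Lemma sr_ge n (M : 'M[R]_n) (z : C) :
  eigenvalue (cmx M) z -> normc z <= spectral_radius M.
Proof.
rewrite eigenvalue_root_char /spectral_radius /cmx.
case: (closed_field_poly_normal _) => r /= Hr.
move: Hr; rewrite (monicP (char_poly_monic _)) scale1r => Hr.
rewrite Hr root_prod_XsubC => zr.
exact: le_bigmax_seq.
Qed.

Lemma sr_le n (M : 'M[R]_n) (B : R) : 0 <= B ->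
  (forall z : C, eigenvalue (cmx M) z -> normc z <= B) -> spectral_radius M <= B.
Proof.
move=> B0 H; rewrite /spectral_radius.
case: (closed_field_poly_normal _) => r /= Hr.
move: Hr; rewrite (monicP (char_poly_monic _)) scale1r => Hr.
rewrite big_seq_cond; apply: bigmax_le => // z /andP[zr _].
apply: H; rewrite eigenvalue_root_char Hr root_prod_XsubC //.
Qed.

Lemma sr_ge0 n (M : 'M[R]_n) : 0 <= spectral_radius M.
Proof.
rewrite /spectral_radius; case: (closed_field_poly_normal _) => r /= _.
exact: bigmax_ge_id.
Qed.
End SR.

Section Scal.
Variable R : realType.

Lemma key_ineq (h c D l1 l2 : R) :
  0 <= l1 -> l1 <= l2 -> l2 < 1 -> 0 < c -> D <= 0 ->
  h * (2 - l2 - l1) = l2 - l1 -> 0 < h ->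
  h ^+ 2 - (1 - c * (1 - l2) + D) * h + D <= 0 \/
  h ^+ 2 + (1 - c * (1 - l1) + D) * h + D <= 0.
Proof.
move=> l10 l12 l21 c0 D0 hE h0.
case: (lerP (h ^+ 2 - (1 - c * (1 - l2) + D) * h + D) 0) => H2; first by left.
case: (lerP (h ^+ 2 + (1 - c * (1 - l1) + D) * h + D) 0) => H1; first by right.
exfalso.
have u0 : 0 < 2 - l2 - l1 by lra.
have Hs : c * (l2 - l1) * h < 2 * h ^+ 2 by nra.
have Hc : c * (2 - l2 - l1) < 2.
  have : c * (h * (2 - l2 - l1)) * h < 2 * h ^+ 2 by rewrite hE.
  move=> H; have : h * (c * (2 - l2 - l1)) < h * 2 by nra.
  by rewrite ltr_pM2l.
have HT : h < 1 - c * (1 - l2).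
  have : h * (2 - l2 - l1) < (1 - c * (1 - l2)) * (2 - l2 - l1) by rewrite hE; nra.
  by rewrite ltr_pM2r.
have h1 : h < 1.
  have : h * (2 - l2 - l1) < 1 * (2 - l2 - l1) by rewrite hE; lra.
  by rewrite ltr_pM2r.
nra.
Qed.

End Scal.

Section Scal.
Variable R : realType.
Local Notation C := R[i].

Lemma normc_real (r : R) : normc (r%:C)%C = `|r|.
Proof. by rewrite /normc /= expr0n /= addr0 sqrtr_sqr. Qed.

Lemma real_root (T D : R) : 0 <= T ^+ 2 - 4 * D ->
  let s := Num.sqrt (T ^+ 2 - 4 * D) in
  ((T + s) / 2) ^+ 2 - T * ((T + s) / 2) + D = 0 /\
  ((T - s) / 2) ^+ 2 - T * ((T - s) / 2) + D = 0 /\ 0 <= s /\ s ^+ 2 = T ^+ 2 - 4 * D.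
Proof.
move=> H s; have s0 : 0 <= s by rewrite sqrtr_ge0.
have s2 : s ^+ 2 = T ^+ 2 - 4 * D by rewrite sqr_sqrtr.
split; [|split]; last by [].
  have -> : ((T + s) / 2) ^+ 2 - T * ((T + s) / 2) + D = (s ^+ 2 - (T ^+ 2 - 4 * D)) / 4 by field.
  by rewrite s2 subrr mul0r.
have -> : ((T - s) / 2) ^+ 2 - T * ((T - s) / 2) + D = (s ^+ 2 - (T ^+ 2 - 4 * D)) / 4 by field.
by rewrite s2 subrr mul0r.
Qed.

Lemma cplx_root (A D y : R) : A ^+ 2 - (A + A) * A + D - y ^+ 2 = 0 ->
  ((A%:C)%C + 'i%C * (y%:C)%C) ^+ 2 - ((A + A)%:C)%C * ((A%:C)%C + 'i%C * (y%:C)%C)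
   + (D%:C)%C = 0.
Proof.
move=> E0.
transitivity (((A ^+ 2 - (A + A) * A + D - y ^+ 2)%:C)%C
                + ('i%C ^+ 2 + 1) * ((y ^+ 2)%:C)%C).
  rewrite !(rmorphB, rmorphD, rmorphM, rmorphN, rmorphXn) /=; move: 'i%C => j; ring.
by rewrite E0 sqr_i addNr mul0r addr0.
Qed.

Lemma s00_root (a b mu : R) : 0 < a <= 1 -> 0 < b <= 1 -> 0 < mu < 1 ->
  exists z : C, z ^+ 2 - ((2 - a - b + a * b * mu)%:C)%C * z
                 + (((1 - a) * (1 - b))%:C)%C = 0 /\ mu <= normc z.
Proof.
move=> /andP[a0 a1] /andP[b0 b1] /andP[m0 m1].
set T := 2 - a - b + a * b * mu; set D := (1 - a) * (1 - b).
have realcase : forall r : R, r ^+ 2 - T * r + D = 0 -> mu <= `|r| ->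
   exists z : C, z ^+ 2 - (T%:C)%C * z + (D%:C)%C = 0 /\ mu <= normc z.
  move=> r Hr Hm; exists (r%:C)%C; rewrite normc_real; split => //.
  by rewrite -rmorphXn -rmorphM -rmorphB -rmorphD Hr.
have abm : 0 <= a * b * mu by rewrite !mulr_ge0 // ltW.
have T0 : 0 <= T by rewrite /T; lra.
have D0 : 0 <= D by rewrite /D; apply: mulr_ge0; lra.
case: (lerP (mu ^+ 2 - T * mu + D) 0) => Hq.
  have disc : 0 <= T ^+ 2 - 4 * D by have := sqr_ge0 (2 * mu - T); nra.
  have [H1 [_ [s0 s2]]] := real_root disc.
  apply: realcase H1 _.
  set s := Num.sqrt _ in s0 s2 *.
  rewrite ger0_norm; last by lra.
  nra.
have HD : mu ^+ 2 <= D.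
  rewrite leNgt; apply/negP => HD; move: Hq; apply/negP; rewrite -leNgt.
  move: HD; rewrite /T /D.
  have -> : a = 1 - (1 - a) by ring.
  have -> : b = 1 - (1 - b) by ring.
  have p0 : 0 <= 1 - a by lra.
  have q0 : 0 <= 1 - b by lra.
  have p1 : 1 - a < 1 by lra.
  have q1 : 1 - b < 1 by lra.
  move: (1 - a) (1 - b) p0 q0 p1 q1 => p q p0 q0 p1 q1 Hpq.
  idtac.
  have E : mu ^+ 2 - (2 - (1 - p) - (1 - q) + (1 - p) * (1 - q) * mu) * mu + p * q
     = - ((1 - mu) * (mu * (p + q - p * q) - p * q)) by ring.
  have key : p * q <= mu * (p + q - p * q).
    case: (lerP q p) => hqp.
      have H1 : q * q <= p * q by apply: ler_wpM2r.
      have qm : q < mu by rewrite ltNge; apply/negP => Hmq; nra.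
      have : 0 <= mu * q * (1 - p) + p * (mu - q) by rewrite addr_ge0 ?mulr_ge0 //; lra.
      lra.
    have H1 : p * p <= p * q by apply: ler_wpM2l => //; lra.
    have pm : p < mu by rewrite ltNge; apply/negP => Hmq; nra.
    have : 0 <= mu * p * (1 - q) + q * (mu - p) by rewrite addr_ge0 ?mulr_ge0 //; lra.
    lra.
  have -> : (1 - (1 - p)) * (1 - (1 - q)) = p * q by ring.
  rewrite E oppr_le0; apply: mulr_ge0; lra.
case: (lerP 0 (T ^+ 2 - 4 * D)) => disc.
  have [H1 [H2 [s0 s2]]] := real_root disc.
  set s := Num.sqrt _ in H1 H2 s0 s2.

  have prod : ((T + s) / 2) * ((T - s) / 2) = D.
    have -> : ((T + s) / 2) * ((T - s) / 2) = (T ^+ 2 - s ^+ 2) / 4 by field.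
    by rewrite s2; field.
  move: (realcase _ H1) (realcase _ H2) => R1 R2.
  have [Hm|Hm] := boolP (mu <= `|(T + s) / 2|); first exact: R1.
  rewrite -ltNge in Hm.
  apply: R2.
  rewrite leNgt; apply/negP => Hm2.
  have : `|(T + s) / 2| * `|(T - s) / 2| < mu * mu.
    by apply: ltr_pM => //; rewrite normr_ge0.
  rewrite -normrM prod ger0_norm; last by nra.
  nra.
pose y := Num.sqrt (4 * D - T ^+ 2) / 2.
have y2 : y ^+ 2 = (4 * D - T ^+ 2) / 4.
  by rewrite /y expr_div_n sqr_sqrtr; [field | lra].
exists (Complex (T / 2) y); split.
  rewrite [Complex _ _]complexE /=.
  set A := T / 2.
  have -> : T = A + A by rewrite /A; field.
  apply: cplx_root.
  by rewrite y2 /A; field.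
rewrite /normc.
have -> : (T / 2) ^+ 2 + y ^+ 2 = D by rewrite y2; field.
have -> : mu = Num.sqrt (mu ^+ 2) by rewrite sqrtr_sqr ger0_norm // ltW.
by rewrite ler_sqrt.
Qed.

Lemma root_ge (T D h : R) : h ^+ 2 - T * h + D <= 0 ->
  exists r : R, r ^+ 2 - T * r + D = 0 /\ h <= r.
Proof.
move=> H.
have disc : 0 <= T ^+ 2 - 4 * D by have := sqr_ge0 (2 * h - T); nra.
have [H1 [_ [s0 s2]]] := real_root disc.
exists ((T + Num.sqrt (T ^+ 2 - 4 * D)) / 2); split => //.
move: s0 s2 H1; set s := Num.sqrt _ => s0 s2 _.
have : 2 * h - T <= s.
  case: (lerP (2 * h - T) 0) => hh; first lra.
  rewrite leNgt; apply/negP => hs.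
  have : s * s < (2 * h - T) * (2 * h - T) by apply: ltr_pM.
  nra.
lra.
Qed.

Lemma root_le (T D h : R) : h ^+ 2 + T * h + D <= 0 ->
  exists r : R, r ^+ 2 - T * r + D = 0 /\ r <= - h.
Proof.
move=> H.
have disc : 0 <= T ^+ 2 - 4 * D by have := sqr_ge0 (2 * h + T); nra.
have [_ [H2 [s0 s2]]] := real_root disc.
exists ((T - Num.sqrt (T ^+ 2 - 4 * D)) / 2); split => //.
move: s0 s2 H2; set s := Num.sqrt _ => s0 s2 _.
have : T + 2 * h <= s.
  case: (lerP (T + 2 * h) 0) => hh; first lra.
  rewrite leNgt; apply/negP => hs.
  have : s * s < (T + 2 * h) * (T + 2 * h) by apply: ltr_pM.
  nra.
lra.
Qed.

Lemma key_roots (a b l1 l2 h : R) :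
  0 <= l1 -> l1 <= l2 -> l2 < 1 -> 0 < a * b -> (1 - a) * (1 - b) <= 0 ->
  h * (2 - l2 - l1) = l2 - l1 -> 0 < h ->
  (exists r : R, r ^+ 2 - (2 - a - b + a * b * l2) * r + (1 - a) * (1 - b) = 0 /\ h <= r) \/
  (exists r : R, r ^+ 2 - (2 - a - b + a * b * l1) * r + (1 - a) * (1 - b) = 0 /\ r <= - h).
Proof.
move=> l10 l12 l21 c0 D0 hE h0.
have T2 : 2 - a - b + a * b * l2 = 1 - a * b * (1 - l2) + (1 - a) * (1 - b) by ring.
have T1 : 2 - a - b + a * b * l1 = 1 - a * b * (1 - l1) + (1 - a) * (1 - b) by ring.
rewrite T1 T2.
case: (key_ineq l10 l12 l21 c0 D0 hE h0) => H.
  by left; apply: root_ge.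
by right; apply: root_le.
Qed.

Lemma line_bound (l1 l2 mu : R) : 0 <= l1 -> l1 <= mu -> mu <= l2 -> l2 < 1 ->
  `|1 - 2 / (2 - l2 - l1) + 2 / (2 - l2 - l1) * mu| <= (l2 - l1) / (2 - l2 - l1).
Proof.
move=> l10 l1m ml2 l21.
have u0 : 0 < 2 - l2 - l1 by lra.
have -> : 1 - 2 / (2 - l2 - l1) + 2 / (2 - l2 - l1) * mu = (2 * mu - l1 - l2) / (2 - l2 - l1).
  by field; rewrite gt_eqF.
rewrite normrM [`|_^-1|]gtr0_norm ?invr_gt0 // ler_pM2r ?invr_gt0 //.
rewrite ler_norml; apply/andP; split; lra.
Qed.

End Scal.

Section Gen.
Variable F : fieldType.

Definition gdc n1 n2 (C : 'M[F]_(n2, n1)) (a b : F) : 'M[F]_(n1 + n2) :=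
  block_mx ((1 - a)%:M) (- a *: C^T)
           (- (b * (1 - a)) *: C) ((1 - b)%:M + (a * b) *: (C *m C^T)).

Lemma qzero (x y q : F) : q = 0 -> x - y = q -> x = y.
Proof. by move=> -> /eqP; rewrite subr_eq0 => /eqP. Qed.
Lemma qzeroN (x y q : F) : q = 0 -> x - y = - q -> x = y.
Proof. by move=> -> /eqP; rewrite oppr0 subr_eq0 => /eqP. Qed.

Lemma eigK n1 n2 (C : 'M[F]_(n2, n1)) (a b l z : F) (w : 'rV_n2) :
  w *m (C *m C^T) = l *: w -> w != 0 ->
  (z - 1 + a) * (z - 1 + b) - a * b * l * z = 0 ->
  z != 1 - a -> eigenvalue (gdc C a b) z.
Proof.
move=> wK w0 Hq za; apply/eigenvalueP.
exists (row_mx ((b * (1 - a)) *: (w *m C)) ((1 - a - z) *: w)); last first.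
  rewrite row_mx_eq0 negb_and !scaler_eq0 negb_or (negbTE w0) orbF.
  by rewrite [1 - a - z == 0]subr_eq0 [_ == z]eq_sym za orbT.
rewrite mul_row_block scale_row_mx; congr row_mx.
  rewrite mul_mx_scalar -!scalemxAr -!scalemxAl !scalerA -scalerDl; congr (_ *: _).
  ring.
rewrite mulmxDr mul_mx_scalar -!scalemxAr -!scalemxAl -!mulmxA wK.

rewrite !scalerA -!scalerDl; congr (_ *: _).
by apply: (qzero Hq); ring.
Qed.

Lemma eigK' n1 n2 (C : 'M[F]_(n2, n1)) (a b l z : F) (w : 'rV_n2) :
  a != 0 -> b != 0 ->
  w *m (C *m C^T) = l *: w -> w != 0 ->
  (z - 1 + a) * (z - 1 + b) - a * b * l * z = 0 ->
  (z != 1 - a) \/ (l != 0 /\ z != 0) -> eigenvalue (gdc C a b) z.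
Proof.
move=> a0 b0 wK w0 Hq H; apply: (eigK wK w0 Hq).
case: H => // [[l0 z0]]; apply/negP => /eqP za.
have E0 : z - 1 + a = 0 by rewrite za; ring.
move: Hq; rewrite E0 mul0r sub0r => /eqP; rewrite oppr_eq0.
by rewrite !mulf_eq0 (negbTE a0) (negbTE b0) (negbTE l0) (negbTE z0).
Qed.

Lemma eigL n1 n2 (C : 'M[F]_(n2, n1)) (a b l z : F) (u : 'rV_n1) :
  a != 0 -> b != 0 ->
  u *m (C^T *m C) = l *: u -> u != 0 ->
  (z - 1 + a) * (z - 1 + b) - a * b * l * z = 0 ->
  (z != 1 - b + a * b * l) \/ (l != 0 /\ z != 0) -> eigenvalue (gdc C a b) z.
Proof.
move=> a0 b0 uL u0 Hq H; apply/eigenvalueP.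
have uL' : u *m C^T *m C = l *: u by rewrite -mulmxA.
have uL2 : u *m C^T *m (C *m C^T) = l *: (u *m C^T) by rewrite mulmxA uL' scalemxAl.
case: H => [zb|[l0 z0]].
  exists (row_mx ((1 - b + a * b * l - z) *: u) (a *: (u *m C^T))); last first.
    rewrite row_mx_eq0 negb_and !scaler_eq0 negb_or (negbTE u0) andbT.
    by rewrite [_ - z == 0]subr_eq0 [_ == z]eq_sym zb.
  rewrite mul_row_block scale_row_mx; congr row_mx.
    rewrite mul_mx_scalar -!scalemxAr -!scalemxAl uL' !scalerA -scalerDl; congr (_ *: _).
    by apply: (qzero Hq); ring.
  rewrite mulmxDr mul_mx_scalar -!scalemxAr -!scalemxAl uL2.
  rewrite !scalerA -!scalerDl; congr (_ *: _); ring.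
have za : z != 1 - a.
  apply/negP => /eqP za.
  have E0 : z - 1 + a = 0 by rewrite za; ring.
  move: Hq; rewrite E0 mul0r sub0r => /eqP; rewrite oppr_eq0.
  by rewrite !mulf_eq0 (negbTE a0) (negbTE b0) (negbTE l0) (negbTE z0).
have uC0 : u *m C^T != 0.
  apply/negP => /eqP H0; move: uL'; rewrite H0 mul0mx => /esym/eqP.
  by rewrite scaler_eq0 (negbTE l0) (negbTE u0).
exists (row_mx (((1 - a) * b * l) *: u) ((1 - a - z) *: (u *m C^T))); last first.
  rewrite row_mx_eq0 negb_and !scaler_eq0 !negb_or (negbTE uC0) andbT.
  by rewrite [1 - a - z == 0]subr_eq0 [_ == z]eq_sym za orbT.
rewrite mul_row_block scale_row_mx; congr row_mx.
  rewrite mul_mx_scalar -!scalemxAr -!scalemxAl uL' !scalerA -scalerDl; congr (_ *: _).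
  ring.
rewrite mulmxDr mul_mx_scalar -!scalemxAr -!scalemxAl uL2.
rewrite !scalerA -!scalerDl; congr (_ *: _).
by apply: (qzero Hq); ring.
Qed.

Lemma scale_solve n (g k : F) (y v : 'rV_n) :
  g != 0 -> g *: v = k *: y -> v = (k / g) *: y.
Proof.
move=> g0 H; by rewrite [k / g]mulrC -scalerA -H scalerA mulVf ?scale1r.
Qed.

Lemma upK n1 n2 (C : 'M[F]_(n2, n1)) (g z : F) :
  g != 0 -> z != 0 -> eigenvalue (gdc C 1 g) z ->
  eigenvalue (C *m C^T) ((z - 1 + g) / g).
Proof.
move=> g0 z0 /eigenvalueP [v Hv v0].
move: Hv v0; rewrite -(hsubmxK v); set x := lsubmx v; set y := rsubmx v.
rewrite mul_row_block scale_row_mx => /eq_row_mx [E1 E2] v0.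
have x0 : x = 0.
  move: E1; rewrite subrr mulr0 oppr0 scale0r mulmx0 addr0 mul_mx_scalar scale0r.
  by move/esym/eqP; rewrite scaler_eq0 (negbTE z0) => /eqP.
move: E2 v0; rewrite x0 mul0mx add0r row_mx_eq0 eqxx /= => E2 y0.
apply/eigenvalueP; exists y => //.
apply: scale_solve => //.
move: E2; rewrite mulmxDr mul_mx_scalar -scalemxAr mul1r => E2.
apply/eqP; rewrite -subr_eq0; apply/eqP.
have -> : (z - 1 + g) *: y = z *: y - (1 - g) *: y.
  by rewrite -scalerBl; congr (_ *: _); ring.
by rewrite -E2 addrAC subrr add0r subrr.
Qed.

Lemma upL n1 n2 (C : 'M[F]_(n2, n1)) (g z : F) :
  g != 0 -> z != 0 -> eigenvalue (gdc C g 1) z ->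
  eigenvalue (C^T *m C) ((z - 1 + g) / g).
Proof.
move=> g0 z0 /eigenvalueP [v Hv v0].
move: Hv v0; rewrite -(hsubmxK v); set x := lsubmx v; set y := rsubmx v.
rewrite mul_row_block scale_row_mx => /eq_row_mx [E1 E2] v0.
set u := x - y *m C.
have E1' : (1 - g) *: u = z *: x.
  rewrite -E1 /u mul_mx_scalar scalerBr -scalemxAr mul1r scaleNr scalemxAl.
  by [].
have E2' : - g *: (u *m C^T) = z *: y.
  rewrite -E2 /u subrr mulr1 (_ : 0%:M = 0); last by apply/matrixP => i j; rewrite !mxE mul0rn.
  rewrite add0r mulmxBl -mulmxA -!scalemxAr scalerBr !scaleNr opprK.
  by [].
have u0 : u != 0.
  apply/negP => /eqP u0; move: v0; rewrite row_mx_eq0.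
  move: E1' E2'; rewrite u0 scaler0 mul0mx scaler0 => /esym/eqP + /esym/eqP.
  by rewrite !scaler_eq0 (negbTE z0) /= => -> ->.
apply/eigenvalueP; exists u => //.
apply: scale_solve => //.
have : z *: u = (1 - g) *: u + g *: (u *m (C^T *m C)).
  rewrite {1}/u scalerBr -E1' [z *: (y *m C)]scalemxAl -E2' -scalemxAl -mulmxA.
  by rewrite scaleNr opprK.
move=> H; apply/eqP; rewrite -subr_eq0; apply/eqP.
have -> : (z - 1 + g) *: u = z *: u - (1 - g) *: u.
  by rewrite -scalerBl; congr (_ *: _); ring.
by rewrite H addrAC subrr add0r subrr.
Qed.

End Gen.

Section Dot.
Variable R : realType.
Local Notation C := R[i].
Local Notation rc := (fun x : R => (x%:C)%C).
Local Notation cj := (@conjc R).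

Definition dot n (u v : 'rV[C]_n) : C := (u *m (map_mx cj v)^T) 0 0.

Lemma dotE n (u v : 'rV[C]_n) : dot u v = \sum_i u 0 i * (v 0 i)^*%C.
Proof. by rewrite /dot mxE; apply: eq_bigr => i _; rewrite !mxE. Qed.

Lemma dot_ge0 n (u : 'rV[C]_n) : 0 <= dot u u.
Proof. by rewrite dotE; apply: sumr_ge0 => i _; apply: mulcJ_ge0. Qed.

Lemma dot_eq0 n (u : 'rV[C]_n) : dot u u = 0 -> u = 0.
Proof.
rewrite dotE => H; apply/matrixP => i j; rewrite ord1 mxE.
have := @psumr_eq0P _ _ xpredT _ (fun k _ => mulcJ_ge0 (u 0 k)) H j isT.
by move/eqP; rewrite mulf_eq0 conjc_eq0 orbb => /eqP.
Qed.

Lemma conj_real_mx m n (A : 'M[R]_(m, n)) :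
  map_mx cj (map_mx rc A) = map_mx rc A.
Proof. by rewrite -map_mx_comp; apply: eq_map_mx => x /=; apply/eqP; rewrite eq_complex /= oppr0 !eqxx. Qed.

Lemma dot_mulr m n (A : 'M[R]_(m, n)) (u : 'rV[C]_m) (v : 'rV[C]_n) :
  dot (u *m map_mx rc A) v = dot u (v *m (map_mx rc A)^T).
Proof.
by rewrite /dot map_mxM -map_trmx conj_real_mx trmx_mul trmxK mulmxA.
Qed.

Lemma dot_mull m n (A : 'M[R]_(m, n)) (u : 'rV[C]_n) (v : 'rV[C]_m) :
  dot u (v *m map_mx rc A) = dot (u *m (map_mx rc A)^T) v.
Proof. by rewrite map_trmx dot_mulr map_trmx trmxK. Qed.

Lemma dotDl n (u v w : 'rV[C]_n) : dot (u + v) w = dot u w + dot v w.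
Proof. by rewrite /dot mulmxDl mxE. Qed.
Lemma dotDr n (u v w : 'rV[C]_n) : dot u (v + w) = dot u v + dot u w.
Proof. by rewrite /dot map_mxD linearD /= mulmxDr mxE. Qed.
Lemma dotNl n (u w : 'rV[C]_n) : dot (- u) w = - dot u w.
Proof. by rewrite /dot mulNmx mxE. Qed.
Lemma dotNr n (u w : 'rV[C]_n) : dot u (- w) = - dot u w.
Proof. by rewrite /dot map_mxN linearN /= mulmxN mxE. Qed.
Lemma dotZl n k (u w : 'rV[C]_n) : dot (k *: u) w = k * dot u w.
Proof. by rewrite /dot -scalemxAl mxE. Qed.

Lemma eig_real m k1 k2 (B1 : 'M[R]_(m, k1)) (B2 : 'M[R]_(m, k2)) (mu : C) :
  B1^T *m B1 = 1%:M -> B2^T *m B2 = 1%:M ->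
  (forall (p : 'rV[C]_k1) (q : 'rV[C]_k2),
      p *m (map_mx rc B1)^T + q *m (map_mx rc B2)^T = 0 -> q = 0) ->
  eigenvalue (map_mx rc (B2^T *m B1) *m (map_mx rc (B2^T *m B1))^T) mu ->
  0 <= mu < 1.
Proof.
move=> H1 H2 Hinj /eigenvalueP [w Hw w0].
set Cc := map_mx rc (B2^T *m B1) in Hw.
have E : mu * dot w w = dot (w *m Cc) (w *m Cc).
  by rewrite -dotZl -Hw mulmxA /Cc -dot_mull.
have dww : 0 < dot w w.
  rewrite lt_def dot_ge0 andbT; apply/negP => /eqP /dot_eq0 H.
  by move: w0; rewrite H eqxx.
set v := w *m (map_mx rc B2)^T.
set c := w *m Cc.
have cE : c = v *m map_mx rc B1 by rewrite /c /Cc /v map_mxM -map_trmx mulmxA.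
have vv : dot v v = dot w w.
  by rewrite {1}/v -dot_mull /v -mulmxA map_trmx -map_mxM H2 map_mx1 mulmx1.
have cc1 : dot (c *m (map_mx rc B1)^T) v = dot c c.
  by rewrite -dot_mull -cE.
have cc2 : dot v (c *m (map_mx rc B1)^T) = dot c c.
  by rewrite map_trmx dot_mull map_trmx trmxK -cE.
have cc3 : dot (c *m (map_mx rc B1)^T) (c *m (map_mx rc B1)^T) = dot c c.
  by rewrite -dot_mull -mulmxA map_trmx -map_mxM H1 map_mx1 mulmx1.
have dd : dot (v - c *m (map_mx rc B1)^T) (v - c *m (map_mx rc B1)^T)
          = dot w w - dot c c.
  rewrite !dotDl !dotDr !dotNl !dotNr vv cc1 cc2 cc3; ring.
have key : dot c c < dot w w.
  rewrite lt_def; apply/andP; split; last first.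
    by rewrite -subr_ge0 -dd dot_ge0.
  apply/negP => /eqP Heq.
  move: dd; rewrite Heq subrr => /dot_eq0 /eqP.
  rewrite subr_eq0 => /eqP Hv.
  have : (- c) *m (map_mx rc B1)^T + w *m (map_mx rc B2)^T = 0.
    by rewrite mulNmx -Hv /v addNr.
  move/Hinj => w00; by move: w0; rewrite w00 eqxx.
have muE : mu = dot c c / dot w w.
  by rewrite -E mulfK // lt0r_neq0.
rewrite muE divr_ge0 ?dot_ge0 //= ltr_pdivrMr // mul1r //.
Qed.

End Dot.

Section Ext.
Variable R : realType.
Local Notation C := R[i].
Local Notation rc := (fun x : R => (x%:C)%C).
Local Notation ReC := (@complex.Re R).

Lemma seq_ext (s : seq R) : s != [::] ->
  exists x1 x2, [/\ x1 \in s, x2 \in s & forall y, y \in s -> x1 <= y <= x2].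
Proof.
elim: s => // x s IH _.
case: (eqVneq s [::]) => [->|sn].
  by exists x, x; split; rewrite ?inE // => y; rewrite inE => /eqP ->; rewrite lexx.
have [x1 [x2 [i1 i2 H]]] := IH sn.
exists (Num.min x x1), (Num.max x x2); split.
- by case: (leP x x1) => _; rewrite inE ?eqxx ?i1 ?orbT.
- by case: (leP x x2) => _; rewrite inE ?eqxx ?i2 ?orbT.
- move=> y; rewrite inE => /orP [/eqP ->|ys].
    by rewrite ge_min le_max !lexx.
  have /andP[h1 h2] := H y ys.
  by rewrite ge_min le_max h1 h2 !orbT.
Qed.

Lemma C_real01 (mu : C) : 0 <= mu < 1 ->
  mu = ((ReC mu)%:C)%C /\ 0 <= ReC mu /\ ReC mu < 1.
Proof.
case: mu => a b /andP [H0 H1]; move: H0 H1; rewrite lecE ltcE /= => /andP[/eqP b0 a0] /andP[_ a1].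
by rewrite b0; split.
Qed.

Lemma eig_extremes n (M : 'M[C]_n) : (0 < n)%N ->
  (forall mu, eigenvalue M mu -> 0 <= mu < 1) ->
  exists l1 l2 : R, [/\ eigenvalue M ((l1%:C)%C), eigenvalue M ((l2%:C)%C), 0 <= l1, l2 < 1 &
     forall mu, eigenvalue M mu -> mu = ((ReC mu)%:C)%C /\ l1 <= ReC mu <= l2].
Proof.
move=> n0 H01.
case: (closed_field_poly_normal (char_poly M)) => r Hr.
move: Hr; rewrite (monicP (char_poly_monic _)) scale1r => Hr.
have eigr : forall z, eigenvalue M z = (z \in r).
  by move=> z; rewrite eigenvalue_root_char Hr root_prod_XsubC.
have rn : map ReC r != [::].
  apply/negP => /eqP /(congr1 size); rewrite size_map /= => r0.
  have := size_char_poly M; rewrite Hr size_prod_XsubC r0 => -[] n00.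
  by move: n0; rewrite -n00.
have [x1 [x2 [i1 i2 Hx]]] := seq_ext rn.
have [z1 z1r e1] := mapP i1; have [z2 z2r e2] := mapP i2.
have [E1 [p1 q1]] : _ := C_real01 (H01 z1 ltac:(by rewrite eigr)).
have [E2 [p2 q2]] : _ := C_real01 (H01 z2 ltac:(by rewrite eigr)).
exists x1, x2; split.
- by rewrite e1 -E1 eigr.
- by rewrite e2 -E2 eigr.
- by rewrite e1.
- by rewrite e2.
- move=> mu Hmu; have [E _] := C_real01 (H01 mu Hmu); split => //.
  by apply: Hx; apply: map_f; rewrite -eigr.
Qed.
End Ext.

Section Main.
Variable R : realType.
Local Notation C := R[i].
Local Notation rc := (fun x : R => (x%:C)%C).
Local Notation ReC := (@complex.Re R).

Lemma normcz : normc (0 : C) = 0.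
Proof. exact: normc0. Qed.

Lemma rc_eq0 (x : R) : (((x%:C)%C : C) == 0) = (x == 0).
Proof. by rewrite eq_complex /= eqxx andbT. Qed.

Lemma cmx_gd n1 n2 (Cm : 'M[R]_(n2, n1)) (a b : R) :
  cmx (gd_iter_mx Cm a b) = gdc (map_mx rc Cm) (a%:C)%C (b%:C)%C.
Proof.
rewrite /cmx /gd_iter_mx /gdc map_block_mx; congr block_mx.
- by rewrite map_scalar_mx rmorphB rmorph1.
- by rewrite map_mxZ map_trmx rmorphN.
- by rewrite map_mxZ rmorphN rmorphM rmorphB rmorph1.
- by rewrite map_mxD map_scalar_mx map_mxZ map_mxM map_trmx rmorphB rmorph1 rmorphM.
Qed.

Lemma rank_inj m n1 n2 (A1 : 'M[R]_(m, n1)) (A2 : 'M[R]_(m, n2)) :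
  \rank (row_mx A1 A2) = (n1 + n2)%N ->
  forall (p : 'rV[C]_n1) (q : 'rV[C]_n2),
    p *m (map_mx rc A1)^T + q *m (map_mx rc A2)^T = 0 -> p = 0 /\ q = 0.
Proof.
move=> Hr p q H.
have rf : row_free (map_mx rc (row_mx A1 A2))^T.
  by rewrite /row_free mxrank_tr mxrank_map Hr.
have : row_mx p q *m (map_mx rc (row_mx A1 A2))^T = 0 *m (map_mx rc (row_mx A1 A2))^T.
  by rewrite mul0mx map_row_mx tr_row_mx mul_row_col.
by move/(row_free_inj rf)/eqP; rewrite row_mx_eq0 => /andP[/eqP -> /eqP ->].
Qed.

Lemma qform (a b mu : R) (r : C) :
  r ^+ 2 - ((2 - a - b + a * b * mu)%:C)%C * r + (((1 - a) * (1 - b))%:C)%C = 0 ->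
  (r - 1 + (a%:C)%C) * (r - 1 + (b%:C)%C) - (a%:C)%C * (b%:C)%C * (mu%:C)%C * r = 0.
Proof.
move=> <-; rewrite !(rmorphB, rmorphD, rmorphM, rmorph1, rmorph_nat) /=; ring.
Qed.

Lemma rootK_le n1 n2 (Cm : 'M[R]_(n2, n1)) (a b mu : R) (r : C) :
  a != 0 -> b != 0 ->
  eigenvalue (map_mx rc Cm *m (map_mx rc Cm)^T) (mu%:C)%C ->
  r ^+ 2 - ((2 - a - b + a * b * mu)%:C)%C * r + (((1 - a) * (1 - b))%:C)%C = 0 ->
  (r != ((1 - a)%:C)%C) \/ (mu != 0 /\ r != 0) ->
  normc r <= spectral_radius (gd_iter_mx Cm a b).
Proof.
move=> a0 b0 /eigenvalueP [w Hw w0] Hr H.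
apply: sr_ge; rewrite cmx_gd.
apply: (eigK' _ _ Hw w0 (qform Hr)).
- by move: a0; rewrite -rc_eq0.
- by move: b0; rewrite -rc_eq0.
case: H => [H|[m0 r0]]; [left|right]; last by split => //; move: m0; rewrite -rc_eq0.
by rewrite rmorphB rmorph1 in H.
Qed.

Lemma rootL_le n1 n2 (Cm : 'M[R]_(n2, n1)) (a b mu : R) (r : C) :
  a != 0 -> b != 0 ->
  eigenvalue ((map_mx rc Cm)^T *m map_mx rc Cm) (mu%:C)%C ->
  r ^+ 2 - ((2 - a - b + a * b * mu)%:C)%C * r + (((1 - a) * (1 - b))%:C)%C = 0 ->
  (r != ((1 - b + a * b * mu)%:C)%C) \/ (mu != 0 /\ r != 0) ->
  normc r <= spectral_radius (gd_iter_mx Cm a b).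
Proof.
move=> a0 b0 /eigenvalueP [u Hu u0] Hr H.
apply: sr_ge; rewrite cmx_gd.
apply: (eigL _ _ Hu u0 (qform Hr)).
- by move: a0; rewrite -rc_eq0.
- by move: b0; rewrite -rc_eq0.
case: H => [H|[m0 r0]]; [left|right]; last by split => //; move: m0; rewrite -rc_eq0.
by rewrite rmorphD rmorphB rmorph1 !rmorphM in H.
Qed.

Lemma line_gen (g : R) (z x : C) : g != 0 -> x = (z - 1 + (g%:C)%C) / (g%:C)%C ->
  x = ((ReC x)%:C)%C -> z = ((1 - g + g * ReC x)%:C)%C.
Proof.
move=> g0 xE E.
have gc : (g%:C)%C != 0 :> C by move: g0; rewrite -rc_eq0.
have : z = x * (g%:C)%C + 1 - (g%:C)%C by rewrite xE divfK //; ring.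
move=> ->; rewrite {1}E !(rmorphB, rmorphD, rmorphM, rmorph1); ring.
Qed.

Lemma lineK n1 n2 (Cm : 'M[R]_(n2, n1)) (g : R) (z : C) : g != 0 ->
  (forall mu, eigenvalue (map_mx rc Cm *m (map_mx rc Cm)^T) mu -> 0 <= mu < 1) ->
  eigenvalue (cmx (gd_iter_mx Cm 1 g)) z -> z != 0 ->
  exists mu : R, eigenvalue (map_mx rc Cm *m (map_mx rc Cm)^T) ((mu%:C)%C)
                 /\ z = ((1 - g + g * mu)%:C)%C.
Proof.
move=> g0 Hr; rewrite cmx_gd rmorph1 => Hz z0.
have gc : (g%:C)%C != 0 :> C by move: g0; rewrite -rc_eq0.
have Hx := upK gc z0 Hz.
have [E _] := C_real01 (Hr _ Hx).
exists (ReC ((z - 1 + (g%:C)%C) / (g%:C)%C)); split; first by rewrite -E.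
exact: line_gen g0 erefl E.
Qed.

Lemma lineL n1 n2 (Cm : 'M[R]_(n2, n1)) (g : R) (z : C) : g != 0 ->
  (forall mu, eigenvalue ((map_mx rc Cm)^T *m map_mx rc Cm) mu -> 0 <= mu < 1) ->
  eigenvalue (cmx (gd_iter_mx Cm g 1)) z -> z != 0 ->
  exists mu : R, eigenvalue ((map_mx rc Cm)^T *m map_mx rc Cm) ((mu%:C)%C)
                 /\ z = ((1 - g + g * mu)%:C)%C.
Proof.
move=> g0 Hr; rewrite cmx_gd rmorph1 => Hz z0.
have gc : (g%:C)%C != 0 :> C by move: g0; rewrite -rc_eq0.
have Hx := upL gc z0 Hz.
have [E _] := C_real01 (Hr _ Hx).
exists (ReC ((z - 1 + (g%:C)%C) / (g%:C)%C)); split; first by rewrite -E.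
exact: line_gen g0 erefl E.
Qed.

End Main.

Section Fin.
Variable R : realType.
Local Notation C := R[i].
Local Notation rc := (fun x : R => (x%:C)%C).
Local Notation ReC := (@complex.Re R).

Lemma rc_inj_eq (x y : R) : (((x%:C)%C : C) == (y%:C)%C) = (x == y).
Proof. by rewrite eq_complex /= eqxx andbT. Qed.

Lemma real_eqC (T D r : R) : r ^+ 2 - T * r + D = 0 ->
  ((r%:C)%C : C) ^+ 2 - (T%:C)%C * (r%:C)%C + (D%:C)%C = 0.
Proof. by move=> Hr; rewrite -rmorphXn -rmorphM -rmorphB -rmorphD Hr. Qed.

Lemma region01 n1 n2 (Cm : 'M[R]_(n2, n1)) (l1 l2 a b : R) :
  eigenvalue (map_mx rc Cm *m (map_mx rc Cm)^T) ((l1%:C)%C) ->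
  eigenvalue (map_mx rc Cm *m (map_mx rc Cm)^T) ((l2%:C)%C) ->
  0 <= l1 -> l1 <= l2 -> l2 < 1 -> 0 < a -> a <= 1 -> 1 <= b ->
  (l2 - l1) / (2 - l2 - l1) <= spectral_radius (gd_iter_mx Cm a b).
Proof.
move=> e1 e2 l10 l12 l21 a0 a1 b1.
have u0 : 0 < 2 - l2 - l1 by lra.
set h := (l2 - l1) / (2 - l2 - l1).
have h0 : 0 <= h by rewrite /h divr_ge0 //; lra.
case: (eqVneq h 0) => [->|hn0]; first exact: sr_ge0.
have hp : 0 < h by rewrite lt_def hn0.
have hE : h * (2 - l2 - l1) = l2 - l1 by rewrite /h divfK // gt_eqF.
have l2p : l2 != 0.
  apply/negP => /eqP l20; move: hE; rewrite l20 => hE.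
  have : h * (2 - 0 - l1) > 0 by apply: mulr_gt0 => //; lra.
  lra.
have ab0 : 0 < a * b by apply: mulr_gt0 => //; lra.
have D0 : (1 - a) * (1 - b) <= 0 by rewrite mulr_ge0_le0 //; lra.
have a0' : a != 0 by rewrite gt_eqF.
have b0' : b != 0 by rewrite gt_eqF //; lra.
case: (key_roots l10 l12 l21 ab0 D0 hE hp) => [[r [Hr hr]]|[r [Hr hr]]].
  apply: le_trans (rootK_le a0' b0' e2 (real_eqC Hr) _).
    by rewrite normc_real ger0_norm //; lra.
  by right; split => //; rewrite rc_eq0 gt_eqF //; lra.
apply: le_trans (rootK_le a0' b0' e1 (real_eqC Hr) _).
  by rewrite normc_real ler0_norm; lra.
by left; rewrite rc_inj_eq lt_eqF //; lra.
Qed.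

Lemma region10 n1 n2 (Cm : 'M[R]_(n2, n1)) (l1 l2 a b : R) :
  eigenvalue ((map_mx rc Cm)^T *m map_mx rc Cm) ((l1%:C)%C) ->
  eigenvalue ((map_mx rc Cm)^T *m map_mx rc Cm) ((l2%:C)%C) ->
  0 <= l1 -> l1 <= l2 -> l2 < 1 -> 1 <= a -> 0 < b -> b <= 1 ->
  (l2 - l1) / (2 - l2 - l1) <= spectral_radius (gd_iter_mx Cm a b).
Proof.
move=> e1 e2 l10 l12 l21 a1 b0 b1.
have u0 : 0 < 2 - l2 - l1 by lra.
set h := (l2 - l1) / (2 - l2 - l1).
have h0 : 0 <= h by rewrite /h divr_ge0 //; lra.
case: (eqVneq h 0) => [->|hn0]; first exact: sr_ge0.
have hp : 0 < h by rewrite lt_def hn0.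
have hE : h * (2 - l2 - l1) = l2 - l1 by rewrite /h divfK // gt_eqF.
have l2p : l2 != 0.
  apply/negP => /eqP l20; move: hE; rewrite l20 => hE.
  have : h * (2 - 0 - l1) > 0 by apply: mulr_gt0 => //; lra.
  lra.
have ab0 : 0 < a * b by apply: mulr_gt0 => //; lra.
have D0 : (1 - a) * (1 - b) <= 0 by rewrite mulr_le0_ge0 //; lra.
have a0' : a != 0 by rewrite gt_eqF //; lra.
have b0' : b != 0 by rewrite gt_eqF.
case: (key_roots l10 l12 l21 ab0 D0 hE hp) => [[r [Hr hr]]|[r [Hr hr]]].
  apply: le_trans (rootL_le a0' b0' e2 (real_eqC Hr) _).
    by rewrite normc_real ger0_norm //; lra.
  by right; split => //; rewrite rc_eq0 gt_eqF //; lra.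
apply: le_trans (rootL_le a0' b0' e1 (real_eqC Hr) _).
  by rewrite normc_real ler0_norm; lra.
have : 0 <= a * b * l1 by rewrite mulr_ge0 //; lra.
by left; rewrite rc_inj_eq lt_eqF //; lra.
Qed.

End Fin.


Unset Implicit Arguments.

Theorem mainTheorem13 (R : realType) (m n1 n2 : nat)
    (A1 : 'M[R]_(m, n1)) (A2 : 'M[R]_(m, n2)) :
  \rank (row_mx A1 A2) = (n1 + n2)%N ->
  A1^T *m A1 = 1%:M ->
  A2^T *m A2 = 1%:M ->
  A2^T *m A1 != 0 ->
  let Cm := A2^T *m A1 in
  let rho := fun g : R * R => spectral_radius (gd_iter_mx Cm g.1 g.2) in
  (* S00 = (0,1] x (0,1] *)
  is_min_on (fun g : R * R => 0 < g.1 <= 1 /\ 0 < g.2 <= 1) rho (rho (1, 1))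
  (* S01 = (0,1] x [1,oo) *)
  /\ (exists v : R,
        is_min_on (fun g : R * R => 0 < g.1 <= 1 /\ 1 <= g.2) rho v
        /\ is_min_on (fun g2 : R => 1 <= g2) (fun g2 => rho (1, g2)) v)
  (* S10 = [1,oo) x (0,1] *)
  /\ (exists v : R,
        is_min_on (fun g : R * R => 1 <= g.1 /\ 0 < g.2 <= 1) rho v
        /\ is_min_on (fun g1 : R => 1 <= g1) (fun g1 => rho (g1, 1)) v).
Proof.
move=> Hrank HA1 HA2 HC0 Cm rho.
have Hinj := rank_inj Hrank.
pose rc := (fun x : R => (x%:C)%C).
have realK : forall mu, eigenvalue (map_mx rc Cm *m (map_mx rc Cm)^T) mu -> 0 <= mu < 1.
  by move=> mu; apply: (eig_real HA1 HA2) => p q /Hinj [].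
have realL : forall mu, eigenvalue ((map_mx rc Cm)^T *m map_mx rc Cm) mu -> 0 <= mu < 1.
  move=> mu Hmu; apply: (eig_real HA2 HA1).
    by move=> p q; rewrite addrC => /Hinj [].
  have -> : map_mx rc (A1^T *m A2) = (map_mx rc Cm)^T.
    by rewrite map_trmx /Cm trmx_mul trmxK.
  by rewrite trmxK.
have n10 : (0 < n1)%N.
  case: (posnP n1) => // n0; move: HC0; rewrite -/Cm.
  have -> : Cm = 0 by apply/matrixP => i j; have h : (j < 0)%N by rewrite -[X in (_ < X)%N]n0 ltn_ord.
  by rewrite eqxx.
have n20 : (0 < n2)%N.
  case: (posnP n2) => // n0; move: HC0; rewrite -/Cm.
  have -> : Cm = 0 by apply/matrixP => i j; have h : (i < 0)%N by rewrite -[X in (_ < X)%N]n0 ltn_ord.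
  by rewrite eqxx.
have [lK1 [lK2 [eK1 eK2 lK10 lK21 HK]]] := eig_extremes n20 realK.
have [lL1 [lL2 [eL1 eL2 lL10 lL21 HL]]] := eig_extremes n10 realL.
have lK12 : lK1 <= lK2 by have [_ /andP[]] := HK _ eK1.
have lL12 : lL1 <= lL2 by have [_ /andP[]] := HL _ eL1.
split; [|split].
- split; first by exists (1, 1); rewrite /= ltr01 lexx.
  move=> [a b] /= [/andP[a0 a1] /andP[b0 b1]].
  rewrite /rho /=; apply: sr_le; first exact: sr_ge0.
  move=> z; rewrite cmx_gd rmorph1 => Hz.
  case: (eqVneq z 0) => [->|z0]; first by rewrite normcz sr_ge0.
  have := upK (oner_neq0 _) z0 Hz; rewrite subrK divr1 => HzK.
  have [E [mu0 mu1]] := C_real01 (realK _ HzK).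
  set mu := complex.Re z in E mu0 mu1.
  have mup : 0 < mu.
    rewrite lt_def mu0 andbT; apply/negP => /eqP m0.
    by move: z0; rewrite E m0 eqxx.
  have := @s00_root R a b mu; rewrite a0 a1 b0 b1 mup mu1 => /(_ isT isT isT) [r [Hr hr]].
  rewrite E normc_real ger0_norm //; apply: (le_trans hr).
  apply: (rootK_le _ _ _ Hr).
  - by rewrite gt_eqF.
  - by rewrite gt_eqF.
  - by rewrite -E.
  right; split; first by rewrite gt_eqF.
  apply/negP => /eqP r0; move: hr; rewrite r0 normcz; lra.
- have u0 : 0 < 2 - lK2 - lK1 by lra.
  set g := 2 / (2 - lK2 - lK1).
  have g1 : 1 <= g by rewrite /g ler_pdivlMr // mul1r; lra.
  have g0 : g != 0 by rewrite gt_eqF //; lra.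
  have LB : forall a b, 0 < a -> a <= 1 -> 1 <= b -> rho (1, g) <= rho (a, b).
    move=> a b a0 a1 b1; rewrite /rho /=; apply: sr_le; first exact: sr_ge0.
    move=> z Hz; case: (eqVneq z 0) => [->|z0]; first by rewrite normcz sr_ge0.
    have [mu [emu zE]] := lineK g0 realK Hz z0.
    have [_ /andP[m1 m2]] := HK _ emu.
    rewrite zE normc_real; apply: (le_trans (line_bound lK10 m1 m2 lK21)).
    exact: region01 eK1 eK2 lK10 lK12 lK21 a0 a1 b1.
  exists (rho (1, g)); split; split.
  + by exists (1, g); rewrite /= ltr01 lexx.
  + by move=> [a b] /= [/andP[a0 a1] b1]; apply: LB.
  + by exists g.
  + by move=> g2 hg2; apply: LB; rewrite ?ltr01 ?lexx.
- have u0 : 0 < 2 - lL2 - lL1 by lra.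
  set g := 2 / (2 - lL2 - lL1).
  have g1 : 1 <= g by rewrite /g ler_pdivlMr // mul1r; lra.
  have g0 : g != 0 by rewrite gt_eqF //; lra.
  have LB : forall a b, 1 <= a -> 0 < b -> b <= 1 -> rho (g, 1) <= rho (a, b).
    move=> a b a1 b0 b1; rewrite /rho /=; apply: sr_le; first exact: sr_ge0.
    move=> z Hz; case: (eqVneq z 0) => [->|z0]; first by rewrite normcz sr_ge0.
    have [mu [emu zE]] := lineL g0 realL Hz z0.
    have [_ /andP[m1 m2]] := HL _ emu.
    rewrite zE normc_real; apply: (le_trans (line_bound lL10 m1 m2 lL21)).
    exact: region10 eL1 eL2 lL10 lL12 lL21 a1 b0 b1.
  exists (rho (g, 1)); split; split.
  + by exists (g, 1); rewrite /= ltr01 lexx.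
  + by move=> [a b] /= [a1 /andP[b0 b1]]; apply: LB.
  + by exists g.
  + by move=> g2 hg2; apply: LB; rewrite ?ltr01 ?lexx.
Qed.
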